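(* Let $0<\mu\le L$, $f\in\mathcal S^1_{\mu,L}(\mathbb R^n)$ with minimizer $x^*$, $\beta\in[0,1]$, and $s>0$ with $\mu s<1$. Let $(x_k)$, $(v_k)$ and $\mathcal E_\beta(k)$ be as in the context. Then for every $k\ge0$, $$\mathcal E_\beta(k)\le\left(\frac{1}{1-\sqrt{\mu s}}+\frac{\beta^2Ls}{2}\right)\big(f(x_k)-f(x^* )\big)+\frac{1+\sqrt{\mu s}+\mu s}{(1-\sqrt{\mu s})^2}\|v_k\|^2+\frac{3\mu}{(1-\sqrt{\mu s})^2}\|x_k-x^*\|^2$$ $$\qquad+\frac{\sqrt{\mu s}}{1-\sqrt{\mu s}}\left[f(x_k)-f(x^* )-\frac{\beta^2s\sqrt{\mu s}-(\beta^2-\beta)s}{2\sqrt{\mu s}}\|\nabla f(x_k)\|^2\right].$$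
   Context: $\mathcal S^1_{\mu,L}(\mathbb R^n)$: differentiable, $\mu$-strongly convex $f:\mathbb R^n\to\mathbb R$ (i.e. $f(y)\ge f(x)+\langle\nabla f(x),y-x\rangle+\frac\mu2\|y-x\|^2$) with $L$-Lipschitz gradient. The sequence: $x_0\in\mathbb R^n$, $x_1=x_0-\frac{2s\nabla f(x_0)}{1+\sqrt{\mu s}}$, and for $k\ge1$, $x_{k+1}=x_k+\frac{1-\sqrt{\mu s}}{1+\sqrt{\mu s}}(x_k-x_{k-1})-s\nabla f(x_k)-\beta\frac{1-\sqrt{\mu s}}{1+\sqrt{\mu s}}s(\nabla f(x_k)-\nabla f(x_{k-1}))$. Velocities $v_k=\frac{x_{k+1}-x_k}{\sqrt s}$. Discrete energy: $$\mathcal E_\beta(k)=\frac{1+\sqrt{\mu s}}{1-\sqrt{\mu s}}\big(f(x_k)-f(x^* )\big)+\frac14\|v_k\|^2+\frac14\Big\|v_k+\frac{2\sqrt\mu}{1-\sqrt{\mu s}}(x_k-x^* )+\beta\sqrt s\,\nabla f(x_k)\Big\|^2-\frac{\beta s\|\nabla f(x_k)\|^2}{2(1-\sqrt{\mu s})}.$$ *)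

(* Defs.v *)
From HB Require Import structures.
From mathcomp Require Import all_boot all_order all_algebra.
From mathcomp Require Import all_classical all_reals all_analysis.
Set Implicit Arguments. Unset Strict Implicit. Unset Printing Implicit Defensive.
Import Order.TTheory GRing.Theory Num.Theory.
Import numFieldNormedType.Exports.
Local Open Scope ring_scope.

Definition dotv {R : realType} {n : nat} (u v : 'rV[R]_n) : R := (u *m v^T) 0 0.
Definition enorm {R : realType} {n : nat} (u : 'rV[R]_n) : R := Num.sqrt (dotv u u).

Definition is_gradient {R : realType} {n : nat} (f : 'rV[R]_n -> R)
  (grad : 'rV[R]_n -> 'rV[R]_n) : Prop :=
  forall x, differentiable f x /\ forall h, 'd f x h = dotv (grad x) h.

Definition strongly_convex_Lsmooth {R : realType} {n : nat} (mu L : R)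
  (f : 'rV[R]_n -> R) (grad : 'rV[R]_n -> 'rV[R]_n) : Prop :=
  is_gradient f grad /\
  (forall x y, f y >= f x + dotv (grad x) (y - x) + mu / 2 * enorm (y - x) ^+ 2) /\
  (forall x y, enorm (grad x - grad y) <= L * enorm (x - y)).

Definition is_iter {R : realType} {n : nat} (mu s beta : R)
  (grad : 'rV[R]_n -> 'rV[R]_n) (x : nat -> 'rV[R]_n) : Prop :=
  let r := Num.sqrt (mu * s) in
  let c := (1 - r) / (1 + r) in
  x 1%N = x 0%N - (2 * s / (1 + r)) *: grad (x 0%N) /\
  forall k : nat,
    x k.+2 = x k.+1 + c *: (x k.+1 - x k) - s *: grad (x k.+1)
             - (beta * c * s) *: (grad (x k.+1) - grad (x k)).

Definition velocity {R : realType} {n : nat} (s : R) (x : nat -> 'rV[R]_n) (k : nat)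
  : 'rV[R]_n := (Num.sqrt s)^-1 *: (x k.+1 - x k).

Definition energy {R : realType} {n : nat} (mu s beta : R) (f : 'rV[R]_n -> R)
  (grad : 'rV[R]_n -> 'rV[R]_n) (xstar : 'rV[R]_n) (x : nat -> 'rV[R]_n) (k : nat) : R :=
  let r := Num.sqrt (mu * s) in
  let v := velocity s x k in
  (1 + r) / (1 - r) * (f (x k) - f xstar)
  + 1 / 4 * enorm v ^+ 2
  + 1 / 4 * enorm (v + (2 * Num.sqrt mu / (1 - r)) *: (x k - xstar)
                     + (beta * Num.sqrt s) *: grad (x k)) ^+ 2
  - beta * s * enorm (grad (x k)) ^+ 2 / (2 * (1 - r)).

(* Main.v *)
Require Import Defs.
From HB Require Import structures.
From mathcomp Require Import all_boot all_order all_algebra.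
From mathcomp Require Import all_classical all_reals all_analysis.
From mathcomp Require Import ring lra.
Import Order.TTheory GRing.Theory Num.Theory.
Import numFieldNormedType.Exports.
Local Open Scope classical_set_scope.
Local Open Scope ring_scope.
Section S.
Variable (R : realType) (n : nat).
Implicit Types u v w : 'rV[R]_n.
Lemma dotvE u v : dotv u v = \sum_j u 0 j * v 0 j.
Proof. by rewrite /dotv !mxE; apply: eq_bigr => j _; rewrite !mxE. Qed.
Lemma dotvC u v : dotv u v = dotv v u.
Proof. by rewrite !dotvE; apply: eq_bigr => j _; rewrite mulrC. Qed.
Lemma dotvDl u v w : dotv (u + v) w = dotv u w + dotv v w.
Proof. by rewrite !dotvE -big_split; apply: eq_bigr => j _; rewrite !mxE mulrDl. Qed.
Lemma dotvZl (c : R) u w : dotv (c *: u) w = c * dotv u w.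
Proof. by rewrite !dotvE mulr_sumr; apply: eq_bigr => j _; rewrite !mxE mulrA. Qed.
Lemma dotvNl u w : dotv (- u) w = - dotv u w.
Proof. by rewrite -scaleN1r dotvZl mulN1r. Qed.
Lemma dotvDr u v w : dotv w (u + v) = dotv w u + dotv w v.
Proof. by rewrite dotvC dotvDl !(dotvC w). Qed.
Lemma dotvZr (c : R) u w : dotv w (c *: u) = c * dotv w u.
Proof. by rewrite dotvC dotvZl dotvC. Qed.
Lemma dotvNr u w : dotv w (- u) = - dotv w u.
Proof. by rewrite dotvC dotvNl dotvC. Qed.
Lemma dotv_ge0 u : 0 <= dotv u u.
Proof. by rewrite dotvE; apply: sumr_ge0 => j _; rewrite -expr2 sqr_ge0. Qed.
Lemma enorm_sq u : enorm u ^+ 2 = dotv u u.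
Proof. by rewrite /enorm sqr_sqrtr // dotv_ge0. Qed.
Lemma enorm_ge0 u : 0 <= enorm u.
Proof. exact: sqrtr_ge0. Qed.
Lemma enormZ (c : R) (u : 'rV[R]_n) : enorm (c *: u) = `|c| * enorm u.
Proof. by rewrite /enorm dotvZl dotvZr mulrA -expr2 sqrtrM ?sqr_ge0 // sqrtr_sqr. Qed.
Lemma test (phi : R -> R) (dp : R) (D c t: R) : is_derive t 1 phi dp ->
  is_derive t 1 (phi + D *: id - c *: (id ^+ 2)) (dp + D - c * (2 * t)).
Proof.
move=> H.
apply: is_derive_eq.
by rewrite expr1 /= /GRing.scale /= !mulr1.
Qed.
Lemma dir_derive (f : 'rV[R]_n -> R) (x h : 'rV[R]_n) (t : R) :
  derive (fun s : R => f (x + s *: h)) t 1 = derive f (x + t *: h) h /\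
  (derivable (fun s : R => f (x + s *: h)) t 1 <-> derivable f (x + t *: h) h).
Proof.
have E : (fun e : R => e^-1 *: (((fun s : R => f (x + s *: h)) \o shift t) (e *: 1) - f (x + t *: h)))
   = (fun e : R => e^-1 *: ((f \o shift (x + t *: h)) (e *: h) - f (x + t *: h))).
  apply/funext => e /=; congr (_ *: (f _ - _)).
  by rewrite [e%:A]mulr1 scalerDl addrCA addrA.
by rewrite /derive /derivable E.
Qed.
Lemma descent (L : R) (f : 'rV[R]_n -> R) grad (hL : 0 < L)
  (hg : is_gradient f grad)
  (hlip : forall x y, enorm (grad x - grad y) <= L * enorm (x - y)) x :
  f (x - L^-1 *: grad x) <= f x - dotv (grad x) (grad x) / (2 * L).
Proof.
set g := grad x; set D := dotv g g.
pose phi := fun s : R => f (x + s *: (- g)).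
have dphi (t : R) : is_derive t 1 phi (dotv (grad (x + t *: (- g))) (- g)).
  have [E1 E2] := dir_derive f x (- g) t.
  have [hd hdv] := hg (x + t *: (- g)).
  apply: DeriveDef; first by apply/E2; exact: diff_derivable.
  by rewrite E1 deriveE.
pose psi := phi + D *: id - (L * D / 2) *: (id ^+ 2).
have dpsi (t : R) : is_derive t 1 psi (dotv (grad (x + t *: (- g))) (- g) + D - (L * D / 2) * (2 * t)).
  exact: test.
have cpsi : {within `[0, L^-1], continuous psi}.
  apply: derivable_within_continuous => t _.
  by have := dpsi t => -[].
have iL : 0 < L^-1 by rewrite invr_gt0.
have [c cI Hc] := @MVT R psi (fun t => dotv (grad (x + t *: (- g))) (- g) + D - (L * D / 2) * (2 * t)) 0 L^-1 iL (fun t _ => dpsi t) cpsi.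
have c0 : 0 < c by move: cI; rewrite in_itv /= => /andP[].
have cL : c < L^-1 by move: cI; rewrite in_itv /= => /andP[].
have Hder : dotv (grad (x + c *: (- g))) (- g) + D - L * D / 2 * (2 * c) <= 0.
  set a := g - grad (x + c *: - g).
  have ha : enorm a <= L * c * enorm g.
    apply: (le_trans (hlip _ _)).
    by rewrite opprD addNKr scalerN opprK enormZ (ger0_norm (ltW c0)) mulrA.
  have e1 : dotv (grad (x + c *: (- g))) (- g) + D = dotv a g.
    by rewrite /a /D dotvNr dotvDl dotvNl; ring.
  clearbody a.
  have e2 := dotv_ge0 (a - (L * c) *: g).
  rewrite !dotvDl !dotvDr !dotvNl !dotvNr !dotvZl !dotvZr in e2. rewrite (dotvC g a) in e2.
  rewrite e1.
  have hA : dotv a a <= (L * c) ^+ 2 * D.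
    rewrite -enorm_sq /D -enorm_sq -exprMn; apply: lerXn2r => //; try by rewrite nnegrE enorm_ge0.
    by rewrite nnegrE mulr_ge0 ?enorm_ge0 // mulr_ge0 // ltW.
  have hLc : 0 < L * c by rewrite mulr_gt0.
  rewrite -/D in e2.
  have h1 : L * c * (dotv a g - L * c * D) <= 0 by nra.
  rewrite pmulr_rle0 // in h1.
  nra.
have p1 : psi L^-1 = phi L^-1 + D * L^-1 - (L * D / 2) * (L^-1 * L^-1) by [].
have p0 : psi 0 = phi 0 + D * 0 - (L * D / 2) * (0 * 0) by [].
rewrite p1 p0 in Hc.
have ph1 : phi L^-1 = f (x - L^-1 *: g) by rewrite /phi scalerN.
have ph0 : phi 0 = f x by rewrite /phi scale0r addr0.
rewrite ph1 ph0 in Hc.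
have hLi : L * L^-1 = 1 by rewrite mulfV // gt_eqF.
have Dd : D / (2 * L) = D * L^-1 / 2 by rewrite invfM; field; rewrite gt_eqF.
rewrite Dd.
have hD : 0 <= D by exact: dotv_ge0.
have hm : (dotv (grad (x + c *: - g)) (- g) + D - L * D / 2 * (2 * c)) * (L^-1 - 0) <= 0.
  by rewrite subr0; apply: mulr_le0_ge0 => //; exact: ltW.
have eq1 : L * D / 2 * (L^-1 / L) = D / L / 2 by field; rewrite gt_eqF.
rewrite eq1 in Hc.
lra.
Qed.
Lemma three_sq (u1 u2 u3 : 'rV[R]_n) :
  dotv (u1 + u2 + u3) (u1 + u2 + u3) <= 3 * (dotv u1 u1 + dotv u2 u2 + dotv u3 u3).
Proof.
have h1 := dotv_ge0 (u1 - u2); have h2 := dotv_ge0 (u1 - u3); have h3 := dotv_ge0 (u2 - u3).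
rewrite !dotvDl !dotvDr !dotvNl !dotvNr in h1 h2 h3 *.
rewrite (dotvC u2 u1) (dotvC u3 u1) (dotvC u3 u2) in h1 h2 h3 *.
lra.
Qed.
End S.
Theorem lemma5p1 (R : realType) (n : nat) (mu L beta s : R)
  (f : 'rV[R]_n -> R) (grad : 'rV[R]_n -> 'rV[R]_n) (xstar : 'rV[R]_n)
  (x : nat -> 'rV[R]_n) :
  0 < mu -> mu <= L ->
  strongly_convex_Lsmooth mu L f grad ->
  (forall y, f xstar <= f y) ->
  0 <= beta -> beta <= 1 ->
  0 < s -> mu * s < 1 ->
  is_iter mu s beta grad x ->
  forall k : nat,
    let r := Num.sqrt (mu * s) in
    energy mu s beta f grad xstar x k <=
      (1 / (1 - r) + beta ^+ 2 * L * s / 2) * (f (x k) - f xstar)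
      + (1 + r + mu * s) / (1 - r) ^+ 2 * enorm (velocity s x k) ^+ 2
      + 3 * mu / (1 - r) ^+ 2 * enorm (x k - xstar) ^+ 2
      + r / (1 - r) * (f (x k) - f xstar
          - (beta ^+ 2 * s * r - (beta ^+ 2 - beta) * s) / (2 * r)
            * enorm (grad (x k)) ^+ 2).
Proof.
move=> mu0 muL [hgr [hsc hlip]] hmin b0 b1 s0 mus _ k /=.
set r := Num.sqrt (mu * s).
have L0 : 0 < L by exact: lt_le_trans muL.
have hdesc := @descent _ _ L f grad L0 hgr hlip (x k).
have hm := hmin (x k - L^-1 *: grad (x k)).
set F := f (x k) - f xstar.
set g := grad (x k).
set v := velocity s x k.
set d := x k - xstar.
have hgg : dotv g g <= 2 * L * F.
  have : dotv g g / (2 * L) <= F by rewrite /F; lra.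
  by rewrite ler_pdivrMr ?mulr_gt0 // mulrC.
rewrite /energy -/r -/F -/g -/v -/d !enorm_sq.
clearbody v d.
set sm := Num.sqrt mu.
set ss := Num.sqrt s.
have hr : r = sm * ss by rewrite /r sqrtrM // ltW.
have hmu : mu = sm ^+ 2 by rewrite sqr_sqrtr // ltW.
have hs : s = ss ^+ 2 by rewrite sqr_sqrtr // ltW.
have sm0 : 0 < sm by rewrite sqrtr_gt0.
have ss0 : 0 < ss by rewrite sqrtr_gt0.
have r0 : 0 < r by rewrite hr mulr_gt0.
have r1 : r < 1.
  have : r ^+ 2 < 1 by rewrite hr exprMn -hmu -hs.
  by rewrite expr_lt1 // ltW.
have hW := @three_sq _ _ v ((2 * sm / (1 - r)) *: d) ((beta * ss) *: g).
rewrite !dotvZl !dotvZr in hW.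
set W := dotv (v + _ + _) _ in hW *.
have hvv := @dotv_ge0 _ _ v.
have hdd := @dotv_ge0 _ _ d.
clearbody W sm ss F.
rewrite hs hmu in hgg hW *.
clear hdesc hm.
clearbody r; subst r.
move: hgg hW hvv hdd.
move: (dotv g g) (dotv v v) (dotv d d) => gg vv dd hgg hW hvv hdd.
have q0 : 0 < 1 - sm * ss by rewrite subr_gt0.
have qn : 1 - sm * ss != 0 by rewrite gt_eqF.
have rn : sm * ss != 0 by rewrite gt_eqF.
rewrite -subr_ge0; set e := (_ - _).
have -> : e = beta ^+ 2 * ss ^+ 2 / 4 * (2 * L * F - gg) + 3 * (sm * ss) / (1 - sm * ss) ^+ 2 * vv
   + 1 / 4 * (3 * (vv + 2 * sm / (1 - sm * ss) * (2 * sm / (1 - sm * ss) * dd) + beta * ss * (beta * ss * gg)) - W).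
  by rewrite /e; field; rewrite qn !gt_eqF.
have t1 : 0 <= beta ^+ 2 * ss ^+ 2 / 4 * (2 * L * F - gg).
  by apply: mulr_ge0; [apply: divr_ge0; [apply: mulr_ge0; apply: sqr_ge0|] | rewrite subr_ge0].
have t2 : 0 <= 3 * (sm * ss) / (1 - sm * ss) ^+ 2 * vv.
  by apply: mulr_ge0 => //; apply: divr_ge0; [apply: mulr_ge0 => //; apply: mulr_ge0; apply: ltW|apply: sqr_ge0].
have t3 : 0 <= 1 / 4 * (3 * (vv + 2 * sm / (1 - sm * ss) * (2 * sm / (1 - sm * ss) * dd) + beta * ss * (beta * ss * gg)) - W).
  by apply: mulr_ge0 => //; rewrite subr_ge0.
lra.
Qed.
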